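(* Let $k\in\omega\setminus\{0,1\}$, let $A$ be a nontrivial closed class of decision tables from $\mathcal M_k^\infty$, $\psi$ a bounded complexity measure, and suppose the function $L_{\psi,A}$ is everywhere defined. Then for every $n\in\omega$ with $L_{\psi,A}(n)>0$, the value $\mathcal H^\infty_{\psi,A}(n)$ is defined and $\mathcal H^\infty_{\psi,A}(n)\ge\log_k L_{\psi,A}(n)$.
   Context: Notation: $\omega=\{0,1,2,\dots\}$; $\mathcal P(\omega)$ is the set of nonempty finite subsets of $\omega$; for $k\in\omega\setminus\{0,1\}$, $E_k=\{0,1,\dots,k-1\}$. $P=\{f_i:i\in\omega\}$ is a set of attributes, $f_i\neq f_j$ for $i\ne j$. Decision tables: $\mathcal M_k^\infty$ is the set of rectangular tables filled with numbers from $E_k$, whose columns are labeled with pairwise different attributes from $P$, whose rows are pairwise different, and each row of which is labeled with a set from $\mathcal P(\omega)$ (its set of decisions). The empty table (no rows) is denoted $\Lambda$ and belongs to $\mathcal M_k^\infty$. For $T\in\mathcal M_k^\infty$: $\Delta(T)$ is the set of rows; $\Pi(T)$ is the intersection of the decision sets of all rows (common decisions); $\mathrm{At}(T)$ is the set of attributes labeling columns. For nonempty $T$, $\Omega_k(T)$ is the set of finite words (including the empty word $\lambda$) over the alphabet $\{(f_i,\delta):f_i\in\mathrm{At}(T),\delta\in E_k\}$; for $\alpha=(f_{i_1},\delta_1)\cdots(f_{i_m},\delta_m)$, $T\alpha$ is the subtable of $T$ consisting of the rows having value $\delta_j$ in the column $f_{i_j}$ for all $j$, and $T\lambda=T$.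 Operations: for $D\subseteq\mathrm{At}(T)$, $I(D,T)$ is obtained from $T$ by deleting the columns labeled with attributes from $D$ and, in each group of rows coinciding on the remaining columns, keeping only the first row; $I(\mathrm{At}(T),T)=\Lambda$. For $\nu:E_k^{|\mathrm{At}(T)|}\to\mathcal P(\omega)$, $J(\nu,T)$ is obtained by replacing the decision set of each row $\bar\delta$ by $\nu(\bar\delta)$. $[T]=\{J(\nu,I(D,T)):D\subseteq\mathrm{At}(T),\ \nu:E_k^{|\mathrm{At}(T)\setminus D|}\to\mathcal P(\omega)\}$; for nonempty $A\subseteq\mathcal M_k^\infty$, $[A]=\bigcup_{T\in A}[T]$. $A$ is a closed class if $[A]=A$; nontrivial if it contains a nonempty table. Decision trees: a $k$-decision tree is a finite directed rooted tree with at least two nodes in which the root and the edges leaving the root are unlabeled, each terminal node is labeled with a decision from $\omega$, and each other node is labeled with an attribute from $P$, each edge leaving such a node being labeled with a number from $E_k$. $\mathrm{At}(\Gamma)$ is the set of attributes labeling nodes of $\Gamma$. For a complete path $\tau=v_1,d_1,\dots,v_m,d_m,v_{m+1}$ (from the root to a terminal node), $\pi(\tau)=\lambda$ if $m=1$, and otherwise $\pi(\tau)=(f_{i_2},\delta_2)\cdots(f_{i_m},\delta_m)$ where $v_j$ is labeled $f_{i_j}$ and $d_j$ is labeled $\delta_j$; $T(\tau)=T\pi(\tau)$. For $T\ne\Lambda$, a nondeterministic decision tree for $T$ is a $k$-decision tree $\Gamma$ with $\mathrm{At}(\Gamma)\subseteq\mathrm{At}(T)$ such that every row of $T$ belongs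 to $T(\tau)$ for some complete path $\tau$, and for every complete path $\tau$ either $T(\tau)=\Lambda$ or the decision at the terminal node of $\tau$ belongs to $\Pi(T(\tau))$. A deterministic decision tree for $T$ is a nondeterministic decision tree for $T$ in which, additionally, exactly one edge leaves the root and the edges leaving any node that is neither the root nor terminal are labeled with pairwise different numbers. Complexity measures: a partially bounded complexity measure is a function $\psi:P^*\to\omega$ on finite words over $P$ such that for all words $\alpha_1,\alpha_2$: $\psi(\alpha_1)=0$ iff $\alpha_1=\lambda$; $\psi(\alpha_1)$ is invariant under permutation of letters; $\psi(\alpha_1)\le\psi(\alpha_1\alpha_2)$; $\psi(\alpha_1\alpha_2)\le\psi(\alpha_1)+\psi(\alpha_2)$. It is bounded if in addition $\psi(\alpha)\ge|\alpha|$ for all $\alpha$. $\psi$ is extended to words $(f_{i_1},\delta_1)\cdots(f_{i_m},\delta_m)$ by $\psi(f_{i_1}\cdots f_{i_m})$ ($\psi(\lambda)=0$). For a $k$-decision tree $\Gamma$, $\psi(\Gamma)=\max_\tau\psi(\pi(\tau))$ over complete paths. For $T\ne\Lambda$, $\psi^d(T)$ (resp. $\psi^a(T)$) is the minimum of $\psi(\Gamma)$ over deterministic (resp. nondeterministic) decision trees $\Gamma$ for $T$; $\psi^d(\Lambda)=\psi^a(\Lambda)=0$. Covers: for $T\ne\Lambda$ and $n\in\omega$, $\Omega_k^n(T)=\{\alpha\in\Omega_k(T):\psi(\alpha)\le n\}$. A finite set $U\subseteq\Omega_k^n(T)$ is a $(\psi,n)$-cover of $T$ if $\bigcup_{\alpha\in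 U}\Delta(T\alpha)=\Delta(T)$; it is irreducible if no proper subset of $U$ is a $(\psi,n)$-cover of $T$. $l_\psi(T,n)$ is the maximum cardinality of an irreducible $(\psi,n)$-cover of $T$; $l_\psi(\Lambda,n)=0$. $L_{\psi,A}(n)$ is undefined if $\{l_\psi(T,n):T\in A\}$ is infinite, and otherwise equals its maximum. $\mathcal H^\infty_{\psi,A}(n)$ is undefined if $\{\psi^d(T):T\in A,\ \psi^a(T)\le n\}$ is infinite, and otherwise equals its maximum. *)

(* Defs.v *)
From Stdlib Require Import Rdefinitions Raxioms Rpower.
From mathcomp Require Import all_boot.
From Stdlib Require List.

Set Implicit Arguments.
Unset Strict Implicit.
Unset Printing Implicit Defensive.

(* Attributes f_i are represented by their index i : nat; a word over P
   is a seq nat; numbers of E_k are nats < k. *)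

Definition bounded_measure (psi : seq nat -> nat) : Prop :=
  [/\ forall a, psi a = 0 <-> a = [::],
      forall a b, perm_eq a b -> psi a = psi b,
      forall a b, psi a <= psi (a ++ b),
      forall a b, psi (a ++ b) <= psi a + psi b
    & forall a, size a <= psi a].

(* columns: list of attribute indices; rows: (values, decision set).
   Decision sets (nonempty finite subsets of omega) are represented
   canonically as nonempty strictly increasing lists. *)
Record table := Table { tattrs : seq nat ; trows : seq (seq nat * seq nat) }.

Definition empty_table : table := Table [::] [::].

Definition dec_set (d : seq nat) : Prop := d != [::] /\ sorted ltn d.

Definition wf_table (k : nat) (T : table) : Prop :=
  [/\ uniq (tattrs T),
      (tattrs T == [::]) = (trows T == [::]),
      uniq (map fst (trows T))
    & forall r, r \in trows T ->
        [/\ size r.1 = size (tattrs T), all (fun x => x < k) r.1 & dec_set r.2]].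

Definition colval (T : table) (r : seq nat) (f : nat) : nat :=
  nth 0 r (index f (tattrs T)).

Definition sat (T : table) (alpha : seq (nat * nat)) (r : seq nat) : bool :=
  all (fun l => colval T r l.1 == l.2) alpha.

Definition subrows (T : table) (alpha : seq (nat * nat)) :=
  [seq r <- trows T | sat T alpha r.1].

Definition common (rs : seq (seq nat * seq nat)) (d : nat) : bool :=
  all (fun r => d \in r.2) rs.

Fixpoint dedup_first (seen : seq (seq nat)) (rs : seq (seq nat * seq nat)) :=
  match rs with
  | [::] => [::]
  | r :: rs' => if r.1 \in seen then dedup_first seen rs'
                else r :: dedup_first (r.1 :: seen) rs'
  end.

Definition I_op (D : seq nat) (T : table) : table :=
  let m := [seq a \notin D | a <- tattrs T] in
  let attrs' := mask m (tattrs T) in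
  if attrs' == [::] then empty_table
  else Table attrs' (dedup_first [::] [seq (mask m r.1, r.2) | r <- trows T]).

Definition J_op (nu : seq nat -> seq nat) (T : table) : table :=
  Table (tattrs T) [seq (r.1, nu r.1) | r <- trows T].

Definition closure_of (T T' : table) : Prop :=
  exists (D : seq nat) (nu : seq nat -> seq nat),
    [/\ {subset D <= tattrs T}, (forall x, dec_set (nu x)) & T' = J_op nu (I_op D T)].

Definition closed_class (k : nat) (A : table -> Prop) : Prop :=
  (forall T, A T -> wf_table k T) /\
  (forall T', A T' <-> exists T, A T /\ closure_of T T').

Definition nontrivial (A : table -> Prop) : Prop :=
  exists T, A T /\ trows T <> [::].

(* non-root nodes: terminal (decision) or attribute node with labelled
   outgoing edges; a tree is the nonempty list of children of the root. *)
Inductive node : Type :=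
| Leaf : nat -> node
| Query : nat -> seq (nat * node) -> node.

Fixpoint node_paths (v : node) : seq (seq (nat * nat) * nat) :=
  match v with
  | Leaf d => [:: ([::], d)]
  | Query f ch =>
      flatten (map (fun '(delta, c) =>
                 map (fun p => ((f, delta) :: p.1, p.2)) (node_paths c)) ch)
  end.

Inductive node_ok (k : nat) (At : seq nat) (det : bool) : node -> Prop :=
| NOLeaf d : node_ok k At det (Leaf d)
| NOQuery f ch :
    f \in At -> ch <> [::] -> (det -> uniq (map fst ch)) ->
    (forall delta c, List.In (delta, c) ch -> delta < k /\ node_ok k At det c) ->
    node_ok k At det (Query f ch).

Definition tree_paths (G : seq node) := flatten (map node_paths G).

(* k-decision tree with At(G) included in At; det = deterministic *)
Definition tree_ok (k : nat) (At : seq nat) (det : bool) (G : seq node) : Prop :=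
  [/\ G <> [::], (det -> size G = 1) & forall v, List.In v G -> node_ok k At det v].

Definition tree_cost (psi : seq nat -> nat) (G : seq node) : nat :=
  \max_(p <- tree_paths G) psi (map fst p.1).

Definition dec_tree (k : nat) (det : bool) (T : table) (G : seq node) : Prop :=
  [/\ tree_ok k (tattrs T) det G,
      forall r, r \in trows T -> exists2 p, p \in tree_paths G & sat T p.1 r.1
    & forall p, p \in tree_paths G -> subrows T p.1 = [::] \/ common (subrows T p.1) p.2].

Definition is_max (S : nat -> Prop) (m : nat) : Prop :=
  S m /\ forall x, S x -> x <= m.

(* psi_opt k psi true T v  <->  psi^d(T) = v ;
   psi_opt k psi false T v <->  psi^a(T) = v *)
Definition psi_opt (k : nat) (psi : seq nat -> nat) (det : bool) (T : table) (v : nat) : Prop :=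
  (trows T = [::] /\ v = 0) \/
  [/\ trows T <> [::],
      exists G, dec_tree k det T G /\ tree_cost psi G = v
    & forall G, dec_tree k det T G -> v <= tree_cost psi G].

Definition in_Omega_n (k : nat) (psi : seq nat -> nat) (T : table) (n : nat)
  (alpha : seq (nat * nat)) : bool :=
  all (fun l => (l.1 \in tattrs T) && (l.2 < k)) alpha && (psi (map fst alpha) <= n).

(* finite sets of words represented by duplicate-free lists *)
Definition is_cover k psi T n (U : seq (seq (nat * nat))) : Prop :=
  all (in_Omega_n k psi T n) U /\
  forall r, r \in trows T -> exists2 alpha, alpha \in U & sat T alpha r.1.

Definition irr_cover k psi T n (U : seq (seq (nat * nat))) : Prop :=
  is_cover k psi T n U /\
  forall U', {subset U' <= U} -> ~ {subset U <= U'} -> ~ is_cover k psi T n U'.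

(* l_val k psi T n v  <->  l_psi(T,n) = v *)
Definition l_val (k : nat) (psi : seq nat -> nat) (T : table) (n v : nat) : Prop :=
  (trows T = [::] /\ v = 0) \/
  (trows T <> [::] /\
   is_max (fun s => exists U, [/\ uniq U, irr_cover k psi T n U & size U = s]) v).

(* L_{psi,A}(n) is defined and equals m *)
Definition L_val k psi (A : table -> Prop) (n m : nat) : Prop :=
  is_max (fun v => exists T, A T /\ l_val k psi T n v) m.

(* H^infty_{psi,A}(n) is defined and equals h *)
Definition H_val k psi (A : table -> Prop) (n h : nat) : Prop :=
  is_max (fun v => exists T, [/\ A T, (exists a, psi_opt k psi false T a /\ a <= n)
                                 & psi_opt k psi true T v]) h.

Definition log_base (k x : nat) : R := Rdiv (ln (INR x)) (ln (INR k)).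

(* Main.v *)
From Stdlib Require Import Reals Lra Classical ClassicalEpsilon.
Require Import Defs.
From Stdlib Require Import Rdefinitions Raxioms.
From mathcomp Require Import all_boot.

Set Implicit Arguments.
Unset Strict Implicit.
Unset Printing Implicit Defensive.
Lemma expn_pow k h : k ^ h = Nat.pow k h.
Proof. by elim: h => // h IH; rewrite expnS IH. Qed.

Lemma real_part (k m h : nat) : 2 <= k -> 0 < m -> m <= k ^ h -> Rle (log_base k m) (INR h).
Proof.
move=> Hk Hm Hmh; rewrite /log_base.
have Hk1 : Rlt 1 (INR k) by apply: (lt_INR 1); apply/ltP.
have lk : Rlt 0 (ln (INR k)) by rewrite -ln_1; apply: ln_increasing => //; lra.
have Hm0 : Rlt 0 (INR m) by apply: (lt_INR 0); apply/ltP.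
have Hle : Rle (ln (INR m)) (Rmult (INR h) (ln (INR k))).
  rewrite -ln_pow; last lra.
  rewrite -pow_INR.
  move: Hmh; rewrite leq_eqVlt => /orP [/eqP->|Hlt]; first by rewrite expn_pow; apply: Rle_refl.
  apply: Rlt_le; apply: ln_increasing => //; apply: lt_INR; apply/ltP.
  by rewrite -expn_pow.
apply (Rmult_le_reg_r (ln (INR k))) => //.
rewrite /Rdiv Rmult_assoc Rinv_l; lra.
Qed.
Lemma max_exists (P : nat -> Prop) B :
  (exists x, P x) -> (forall x, P x -> x <= B) -> exists h, is_max P h.
Proof.
elim: B => [|B IH] [x Px] Hb.
  exists 0; split; last by move=> y /Hb.
  by have := Hb _ Px; rewrite leqn0 => /eqP <-.
case: (classic (P B.+1)) => HB.
  by exists B.+1; split.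
apply: IH; first by exists x.
move=> y Py; have := Hb _ Py; rewrite leq_eqVlt => /orP [/eqP E|//].
by rewrite E in Py.
Qed.

Lemma min_exists (P : nat -> Prop) :
  (exists x, P x) -> exists x, P x /\ forall y, P y -> x <= y.
Proof.
move=> [x Px]; apply: NNPP => Hn.
suff H : forall n y, y <= n -> ~ P y by exact: (H x x (leqnn x) Px).
elim=> [|n IH] y Hy Py.
  apply: Hn; exists y; split => // z _; move: Hy; rewrite leqn0 => /eqP ->.
  done.
move: Hy; rewrite leq_eqVlt => /orP [/eqP E|Hy]; last exact: (IH y Hy Py).
apply: Hn; exists y; split => // z Pz.
case: (leqP y z) => // Hz.
by exfalso; apply: (IH z) => //; rewrite -ltnS -E.
Qed.

Definition node_ind' (P : node -> Prop) (HL : forall d, P (Leaf d))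
  (HQ : forall f ch, (forall d c, List.In (d, c) ch -> P c) -> P (Query f ch)) :
  forall v, P v :=
  fix rec v := match v with
  | Leaf d => HL d
  | Query f ch => HQ f ch
     ((fix go (ch : seq (nat * node)) : forall d c, List.In (d, c) ch -> P c :=
        match ch with
        | nil => fun d c H => False_ind _ H
        | cons (d', c') xs => fun d c H =>
            match H with
            | or_introl e => eq_ind c' P (rec c') c (f_equal snd e)
            | or_intror h => go xs d c h
            end
        end) ch)
  end.

Lemma node_paths_cons f d c ch :
  node_paths (Query f ((d, c) :: ch)) =
  [seq ((f, d) :: p.1, p.2) | p <- node_paths c] ++ node_paths (Query f ch).
Proof. by []. Qed.

Lemma mem_paths_Query f ch p : p \in node_paths (Query f ch) ->
  exists d c q, [/\ List.In (d, c) ch, q \in node_paths c & p = ((f, d) :: q.1, q.2)].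
Proof.
elim: ch => [|[d c] ch IH] //.
rewrite node_paths_cons mem_cat => /orP [/mapP [q Hq ->]|/IH [d' [c' [q [H1 H2 H3]]]]].
  by exists d, c, q; split => //; left.
by exists d', c', q; split => //; right.
Qed.

Lemma paths_Query_mem f ch d c q : List.In (d, c) ch -> q \in node_paths c ->
  ((f, d) :: q.1, q.2) \in node_paths (Query f ch).
Proof.
elim: ch => [|[d' c'] ch IH] // [[-> ->]|H] Hq; rewrite node_paths_cons mem_cat.
  by apply/orP; left; apply/mapP; exists q.
by rewrite IH ?orbT.
Qed.

Lemma size_paths_Query f ch :
  size (node_paths (Query f ch)) = sumn [seq size (node_paths x.2) | x <- ch].
Proof.
elim: ch => [|[d c] ch IH] //.
by rewrite node_paths_cons size_cat size_map IH.
Qed.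

Lemma in_map_fst (ch : seq (nat * node)) x : x \in map fst ch -> exists c, List.In (x, c) ch.
Proof.
elim: ch => [|[d c] ch IH] //=; rewrite in_cons => /orP [/eqP ->|/IH [c' H]].
  by exists c; left.
by exists c'; right.
Qed.

Lemma mem_tree_paths G p : p \in tree_paths G -> exists v, List.In v G /\ p \in node_paths v.
Proof.
elim: G => [|v G IH] //=; rewrite /tree_paths /= mem_cat => /orP [H|/IH [w [H1 H2]]].
  by exists v; split => //; left.
by exists w; split => //; right.
Qed.

Lemma node_paths_ok k At det v : node_ok k At det v -> forall p, p \in node_paths v ->
  all (fun l => (l.1 \in At) && (l.2 < k)) p.1.
Proof.
elim/node_ind': v => [d|f ch IH] Hok p /=.
  by rewrite inE => /eqP ->.
inversion Hok as [|f' ch' Hf Hne Huq Hch]; subst.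
move=> /mem_paths_Query [d [c [q [Hin Hq ->]]]] /=.
have [Hd Hc] := Hch _ _ Hin.
by rewrite Hf Hd (IH _ _ Hin Hc _ Hq).
Qed.

Lemma tree_paths_ok k At det G : tree_ok k At det G -> forall p, p \in tree_paths G ->
  all (fun l => (l.1 \in At) && (l.2 < k)) p.1.
Proof.
move=> [_ _ H] p /mem_tree_paths [v [Hv Hp]].
exact: (node_paths_ok (H _ Hv) Hp).
Qed.

Lemma sumn_le (ch : seq (nat * node)) B :
  (forall d c, List.In (d, c) ch -> size (node_paths c) <= B) ->
  sumn [seq size (node_paths x.2) | x <- ch] <= size ch * B.
Proof.
elim: ch => [|[d c] ch IH] //= H.
rewrite mulSn leq_add //; first by apply: (H d); left.
by apply: IH => d' c' Hi; apply: (H d'); right.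
Qed.

Lemma paths_count k At v : 0 < k -> node_ok k At true v -> forall L,
  (forall p, p \in node_paths v -> size p.1 <= L) -> size (node_paths v) <= k ^ L.
Proof.
move=> Hk; elim/node_ind': v => [d|f ch IH] Hok L HL.
  by rewrite /= expn_gt0 Hk.
inversion Hok as [|f' ch' Hf Hne Huq Hch]; subst.
rewrite size_paths_Query.
case: L HL => [|L] HL.
  suff -> : sumn [seq size (node_paths x.2) | x <- ch] = 0 by [].
  apply/eqP; rewrite -leqn0 -(muln0 (size ch)); apply: sumn_le => d c Hin.
  case E: (node_paths c) => [|q qs] //.
  have Hq : q \in node_paths c by rewrite E mem_head.
  by have := HL _ (paths_Query_mem f Hin Hq).
apply: (leq_trans (sumn_le (B := k ^ L) _)).
  move=> d c Hin; have [_ Hc] := Hch _ _ Hin.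
  apply: (IH _ _ Hin Hc) => q Hq.
  by have := HL _ (paths_Query_mem f Hin Hq).
rewrite expnS leq_mul2r; apply/orP; right.
have -> : size ch = size (map fst ch) by rewrite size_map.
have -> : k = size (iota 0 k) by rewrite size_iota.
apply: uniq_leq_size; first exact: Huq.
move=> x /in_map_fst [c Hin]; have [Hx _] := Hch _ _ Hin.
by rewrite mem_iota.
Qed.
Lemma mem_In (T : eqType) (x : T) s : x \in s -> List.In x s.
Proof. elim: s => [|y s IH] //=; rewrite in_cons => /orP [/eqP ->|/IH]; by [left|right]. Qed.

Lemma In_mem (T : eqType) (x : T) s : List.In x s -> x \in s.
Proof. elim: s => [|y s IH] //= [->|/IH H]; by rewrite in_cons ?eqxx ?H ?orbT. Qed.

Fixpoint build (k : nat) (dec : seq (nat * nat) -> nat) (F : seq nat)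
  (pre : seq (nat * nat)) : node :=
  match F with
  | [::] => Leaf (dec pre)
  | f :: F' => Query f [seq (d, build k dec F' (rcons pre (f, d))) | d <- iota 0 k]
  end.

Lemma build_paths k dec F pre p : p \in node_paths (build k dec F pre) ->
  map fst p.1 = F /\ p.2 = dec (pre ++ p.1).
Proof.
elim: F pre p => [|f F IH] pre p /=.
  by rewrite inE => /eqP -> /=; rewrite cats0.
move=> /mem_paths_Query [d [c [q [Hin Hq ->]]]] /=.
move: Hin => /List.in_map_iff [d' [E _]]; case: E => E1 E2; subst.
have [H1 H2] := IH _ _ Hq.
by rewrite H1 H2 cat_rcons.
Qed.

Lemma build_mem k dec F pre w : map fst w = F -> all (fun l => l.2 < k) w ->
  (w, dec (pre ++ w)) \in node_paths (build k dec F pre).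
Proof.
elim: F pre w => [|f F IH] pre [|[f' d] w] //=.
  by move=> _ _; rewrite cats0 inE.
case=> -> Hw /andP [Hd Hall].
have := paths_Query_mem f (c := build k dec F (rcons pre (f, d))) (d := d)
   (ch := [seq (d0, build k dec F (rcons pre (f, d0))) | d0 <- iota 0 k]) _
   (IH (rcons pre (f, d)) w Hw Hall).
rewrite /= -cat_rcons; apply.
apply/List.in_map_iff; exists d; split => //.
by apply: mem_In; rewrite mem_iota.
Qed.

Lemma build_ok k At dec F pre : 0 < k -> {subset F <= At} ->
  node_ok k At true (build k dec F pre).
Proof.
move=> Hk; elim: F pre => [|f F IH] pre HF /=; first by constructor.
constructor.
- by apply: HF; rewrite mem_head.
- by rewrite -(prednK Hk).
- by move=> _; rewrite -map_comp /= map_id iota_uniq.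
- move=> d c /List.in_map_iff [d' [E Hd]]; case: E => E1 E2; subst; split.
    by move: (In_mem Hd); rewrite mem_iota.
  by apply: IH => x Hx; apply: HF; rewrite in_cons Hx orbT.
Qed.
Definition Fof (U : seq (seq (nat * nat))) := flatten [seq map fst a | a <- U].

Definition decf (T : table) (w : seq (nat * nat)) : nat :=
  match subrows T w with
  | [::] => 0
  | r0 :: _ => head 0 [seq d <- r0.2 | common (subrows T w) d]
  end.

Lemma head_filter (P : pred nat) s : has P s -> P (head 0 (filter P s)).
Proof. by elim: s => [|x s IH] //=; case: (boolP (P x)) => //= _ /IH. Qed.

Lemma agree T w x y f : sat T w x -> sat T w y -> f \in map fst w ->
  colval T x f = colval T y f.
Proof.
move=> /allP Hx /allP Hy /mapP [l Hl ->].
by move: (Hx _ Hl) (Hy _ Hl) => /eqP -> /eqP ->.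
Qed.

Lemma in_Fof U a x : a \in U -> x \in map fst a -> x \in Fof U.
Proof. by move=> Ha Hx; apply/flattenP; exists (map fst a) => //; apply: map_f. Qed.

Lemma colval_lt k T r f : wf_table k T -> r \in trows T -> f \in tattrs T ->
  colval T r.1 f < k.
Proof.
move=> [_ _ _ Hw] Hr Hf; have [Hs Ha _] := Hw _ Hr.
rewrite /colval; apply: (allP Ha); apply: mem_nth.
by rewrite Hs index_mem.
Qed.

Lemma tree_paths1 v : tree_paths [:: v] = node_paths v.
Proof. by rewrite /tree_paths /= cats0. Qed.

Lemma det_from_cover k psi T U : 2 <= k -> wf_table k T ->
  (forall a, a \in U -> {subset map fst a <= tattrs T}) ->
  (forall r, r \in trows T -> exists2 a, a \in U & sat T a r.1) ->
  (forall a, a \in U -> exists d, common (subrows T a) d) ->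
  exists G, dec_tree k true T G /\ tree_cost psi G <= psi (Fof U).
Proof.
move=> Hk Hwf HU Hcov Hdec.
have HF : {subset Fof U <= tattrs T}.
  by move=> x /flattenP [s /mapP [a Ha ->] Hx]; exact: HU _ Ha _ Hx.
exists [:: build k (decf T) (Fof U) [::]]; split; last first.
  apply/bigmax_leqP_seq => p; rewrite tree_paths1 => /build_paths [-> _] _.
  by [].
split.
- split => //.
  move=> v [<-|//]; apply: build_ok => //; exact: ltnW.
- move=> r Hr.
  set w := [seq (f, colval T r.1 f) | f <- Fof U].
  exists (w, decf T ([::] ++ w)); last first.
    by rewrite /sat /w all_map; apply/allP => f _ /=.
  rewrite tree_paths1; apply: build_mem.
    by rewrite /w -map_comp map_id.
  rewrite /w all_map; apply/allP => f Hf /=.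
  exact: colval_lt Hwf Hr (HF _ Hf).
- move=> p; rewrite tree_paths1 => /build_paths [HpF ->] /=.
  case E: (subrows T p.1) => [|r0 rs]; [by left | right].
  have : r0 \in subrows T p.1 by rewrite E mem_head.
  rewrite mem_filter => /andP [Hs0 Hr0].
  have [a Ha Hsa] := Hcov _ Hr0.
  have [d Hd] := Hdec _ Ha.
  have Hc : common (subrows T p.1) d.
    apply/allP => r; rewrite mem_filter => /andP [Hs Hr].
    apply: (allP Hd); rewrite mem_filter Hr andbT.
    apply/allP => l Hl.
    rewrite (agree (w := p.1) (y := r0.1) Hs Hs0); first exact: (allP Hsa _ Hl).
    by rewrite HpF; apply: (in_Fof Ha); apply: map_f.
  rewrite /decf E; rewrite E in Hc.
  apply: head_filter; apply/hasP; exists d => //.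
  by apply: (allP Hc); rewrite mem_head.
Qed.
Lemma psi_Fof psi U n : bounded_measure psi ->
  (forall a, a \in U -> psi (map fst a) <= n) -> psi (Fof U) <= size U * n.
Proof.
move=> [H0 _ _ Hsub _]; elim: U => [|a U IH] HU.
  by rewrite /Fof /=; have [_ ->] := H0 [::].
rewrite /Fof /= -/(Fof U) mulSn.
apply: leq_trans (Hsub _ _) _; apply: leq_add.
  by apply: HU; rewrite mem_head.
by apply: IH => b Hb; apply: HU; rewrite in_cons Hb orbT.
Qed.

Lemma private_row k psi T n U a : uniq U -> irr_cover k psi T n U -> a \in U ->
  exists2 r, r \in trows T & sat T a r.1 /\ forall b, b \in U -> sat T b r.1 -> b = a.
Proof.
move=> Hu [[HO Hcov] Hirr] Ha.
set U' := [seq b <- U | b != a].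
have Hsub : {subset U' <= U} by move=> x; rewrite mem_filter => /andP [].
have Hns : ~ {subset U <= U'} by move=> H; move: (H _ Ha); rewrite mem_filter eqxx.
have Hnc := Hirr U' Hsub Hns.
have HO' : all (in_Omega_n k psi T n) U'.
  by apply/allP => x /Hsub; apply: (allP HO).
apply: NNPP => Hno; apply: Hnc; split => // r Hr.
apply: NNPP => Hr'; apply: Hno; exists r => //.
have [b Hb Hsb] := Hcov _ Hr.
have Hpriv : forall c, c \in U -> sat T c r.1 -> c = a.
  move=> c Hc Hsc; apply: NNPP => Hca; apply: Hr'; exists c => //.
  by rewrite mem_filter Hc andbT; apply/eqP.
by split => //; rewrite -(Hpriv _ Hb Hsb).
Qed.

Lemma irr_size k psi T n U : uniq U -> irr_cover k psi T n U -> size U <= size (trows T).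
Proof.
move=> Hu Hirr.
pose g a := epsilon (inhabits ([::] : seq nat))
  (fun x => x \in map fst (trows T) /\ forall b, b \in U -> sat T b x -> b = a).
have Hg : forall a, a \in U -> (g a \in map fst (trows T)) /\ sat T a (g a) /\
    forall b, b \in U -> sat T b (g a) -> b = a.
  move=> a Ha.
  have [r Hr [Hs Hp]] := private_row Hu Hirr Ha.
  have Hex : exists x, x \in map fst (trows T) /\ forall b, b \in U -> sat T b x -> b = a.
    by exists r.1; split => //; apply: map_f.
  have [H1 H2] := epsilon_spec (inhabits ([::] : seq nat)) _ Hex.
  split => //; split => //.
  apply: NNPP => Hn.
  have [_ Hcov] := Hirr.1.
  move: H1 => /mapP [r' Hr' E].
  have [b Hb Hsb] := Hcov _ Hr'.
  rewrite -E in Hsb; have := H2 _ Hb Hsb; move=> Eb; subst b.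
  by apply: Hn; rewrite /g.
rewrite -(size_map fst) -(size_map g).
apply: uniq_leq_size.
  rewrite map_inj_in_uniq // => a b Ha Hb E.
  have [_ [Hsa _]] := Hg _ Ha.
  have [_ [_ Hpb]] := Hg _ Hb.
  by apply: Hpb => //; rewrite -E.
by move=> x /mapP [a Ha ->]; have [] := Hg _ Ha.
Qed.

Lemma l_exists k psi T n V : trows T <> [::] -> uniq V -> irr_cover k psi T n V ->
  exists v, l_val k psi T n v /\ size V <= v.
Proof.
move=> Hne Hu Hirr.
have [h [Hh Hmax]] : exists h, is_max
    (fun s => exists U, [/\ uniq U, irr_cover k psi T n U & size U = s]) h.
  apply: (max_exists (B := size (trows T))); first by exists (size V), V.
  by move=> x [U [Hu' Hi' <-]]; apply: irr_size Hu' Hi'.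
exists h; split; first by right; split => //; split.
by apply: Hmax; exists V.
Qed.
Lemma irr_sub k psi T n U0 : is_cover k psi T n U0 ->
  exists V, [/\ uniq V, {subset V <= U0} & irr_cover k psi T n V].
Proof.
move=> [HO Hcov].
have Hcl : forall U', {subset U' <= U0} -> is_cover k psi T n U' ->
    is_cover k psi T n (undup U').
  move=> U' _ [HO' Hc']; split.
    by apply/allP => x; rewrite mem_undup; apply: (allP HO').
  by move=> r Hr; have [a Ha Hs] := Hc' _ Hr; exists a; rewrite ?mem_undup.
have [s0 [[V0 [Hu0 Hs0 Hc0 Esz]] Hmin]] : exists s0,
   (exists V, [/\ uniq V, {subset V <= U0}, is_cover k psi T n V & size V = s0]) /\
   forall y, (exists V, [/\ uniq V, {subset V <= U0}, is_cover k psi T n V & size V = y]) ->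
     s0 <= y.
  apply: min_exists; exists (size (undup U0)), (undup U0); split => //.
  - exact: undup_uniq.
  - by move=> x; rewrite mem_undup.
  - exact: Hcl.
exists V0; split => //; split => // U' HU' Hn HcU'.
have Hsz : s0 <= size (undup U').
  apply: Hmin; exists (undup U'); split => //.
  - exact: undup_uniq.
  - by move=> x; rewrite mem_undup => /HU' /Hs0.
  - by apply: Hcl => // x /HU' /Hs0.
have Hsub : {subset undup U' <= V0} by move=> x; rewrite mem_undup => /HU'.
have Hle : size V0 <= size (undup U') by rewrite Esz.
have [_ Heq] := uniq_min_size (undup_uniq U') Hsub Hle.
by apply: Hn => x; rewrite -Heq mem_undup.
Qed.

Lemma upper k psi A n m T a v : 2 <= k -> closed_class k A -> bounded_measure psi ->
  L_val k psi A n m -> A T -> psi_opt k psi false T a -> a <= n ->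
  psi_opt k psi true T v -> v <= m * n.
Proof.
move=> Hk [HAwf _] Hpsi [_ HLmax] HT Ha Han Hv.
case: Hv => [[_ ->] //|[Hne _ Hmin]].
case: Ha => [[Hr _] //|[_ [G [[HGok HGcov HGdec] HGc]] _]].
have Hwf := HAwf _ HT.
set U0 := map fst (tree_paths G).
have HO : forall a', a' \in U0 -> in_Omega_n k psi T n a'.
  move=> a' /mapP [p Hp ->]; rewrite /in_Omega_n (tree_paths_ok HGok Hp) /=.
  apply: leq_trans Han; rewrite -HGc.
  by rewrite /tree_cost; apply: leq_bigmax_seq Hp _.
have Hc0 : is_cover k psi T n U0.
  split; first by apply/allP.
  by move=> r Hr; have [p Hp Hs] := HGcov _ Hr; exists p.1 => //; apply: map_f.
have [V [HuV HsV HirrV]] := irr_sub Hc0.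
have [lv [Hlv HVlv]] := l_exists Hne HuV HirrV.
have Hlvm : lv <= m by apply: HLmax; exists T.
have HOV : forall a', a' \in V -> in_Omega_n k psi T n a' by move=> a' /HsV /HO.
have Hat : forall a', a' \in V -> {subset map fst a' <= tattrs T}.
  move=> a' /HOV /andP [Hall _] x /mapP [l Hl ->].
  by have /andP [] := allP Hall _ Hl.
have Hdc : forall a', a' \in V -> exists d, common (subrows T a') d.
  move=> a' /HsV /mapP [p Hp ->]; exists p.2.
  by case: (HGdec _ Hp) => [-> //|].
have [G' [HG' HG'c]] := det_from_cover psi Hk Hwf Hat HirrV.1.2 Hdc.
apply: leq_trans (Hmin _ HG') _.
apply: leq_trans HG'c _.
apply: leq_trans (psi_Fof (n := n) Hpsi _) _.
  by move=> a' /HOV /andP [].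
by rewrite leq_mul2r (leq_trans HVlv Hlvm) orbT.
Qed.
Lemma opt_exists k psi det T : trows T <> [::] -> (exists G, dec_tree k det T G) ->
  exists v, psi_opt k psi det T v.
Proof.
move=> Hne [G HG].
have [v [[G' [HG' Ec]] Hmin]] : exists v,
    (exists G, dec_tree k det T G /\ tree_cost psi G = v) /\
    forall y, (exists G, dec_tree k det T G /\ tree_cost psi G = y) -> v <= y.
  by apply: min_exists; exists (tree_cost psi G), G.
exists v; right; split => //; first by exists G'.
by move=> G2 HG2; apply: Hmin; exists G2.
Qed.

Definition nuf (T : table) (U : seq (seq (nat * nat))) (x : seq nat) : seq nat :=
  let s := [seq i <- iota 0 (size U) | sat T (nth [::] U i) x] in
  if s is [::] then [:: 0] else s.

Lemma nuf_dec T U x : dec_set (nuf T U x).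
Proof.
rewrite /nuf; case E: [seq i <- iota 0 (size U) | sat T (nth [::] U i) x] => [|y s].
  by split.
split => //; rewrite -E; apply: sorted_filter; first exact: ltn_trans.
exact: iota_ltn_sorted.
Qed.

Lemma nuf_in T U a x : a \in U -> sat T a x -> index a U \in nuf T U x.
Proof.
move=> Ha Hs.
have Hi : index a U \in [seq i <- iota 0 (size U) | sat T (nth [::] U i) x].
  by rewrite mem_filter nth_index // Hs mem_iota /= index_mem.
by rewrite /nuf; case: [seq i <- _ | _] Hi.
Qed.

Lemma nuf_priv T U i x : uniq U -> i < size U -> sat T (nth [::] U i) x ->
  (forall b, b \in U -> sat T b x -> b = nth [::] U i) ->
  forall j, j \in nuf T U x -> j = i.
Proof.
move=> Hu Hi Hs Hp j.
have Hi' : i \in [seq i <- iota 0 (size U) | sat T (nth [::] U i) x].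
  by rewrite mem_filter Hs mem_iota.
rewrite /nuf; case E: [seq i <- _ | _] Hi' => [//|y s] _; rewrite -E.
rewrite mem_filter mem_iota /= => /andP [Hsj Hj].
have := Hp _ (mem_nth [::] Hj) Hsj => /eqP; rewrite nth_uniq //.
by move/eqP.
Qed.

Lemma dedup_id seen rs : uniq (map fst rs) -> (forall r, r \in rs -> r.1 \notin seen) ->
  dedup_first seen rs = rs.
Proof.
elim: rs seen => [|r rs IH] seen //= /andP [Hr Hu] Hs.
rewrite (negbTE (Hs r (mem_head _ _))) IH //.
move=> r' Hr'; rewrite in_cons negb_or Hs ?in_cons ?Hr' ?orbT // andbT.
apply/eqP => E; move: Hr; rewrite -E.
by rewrite (map_f fst Hr').
Qed.

Lemma I_nil k T : wf_table k T -> trows T <> [::] -> I_op [::] T = T.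
Proof.
case: T => att rs [Hua Hemp Hur Hrow] Hne /=.
have Hm : [seq a \notin [::] | a <- att] = nseq (size att) true.
  by elim: (att) => //= a s ->.
rewrite /I_op /= Hm mask_true //.
have -> : (att == [::]) = false by rewrite Hemp; apply/eqP.
have -> : [seq (mask (nseq (size att) true) r.1, r.2) | r <- rs] = rs.
  rewrite -[RHS]map_id; apply/eq_in_map => r Hr.
  have [Hs _ _] := Hrow _ Hr.
  by rewrite mask_true ?Hs //; case: r {Hr Hs}.
by rewrite dedup_id.
Qed.
Fixpoint chain (w : seq (nat * nat)) (d : nat) : node :=
  match w with
  | [::] => Leaf d
  | l :: w' => Query l.1 [:: (l.2, chain w' d)]
  end.

Lemma chain_paths w d : node_paths (chain w d) = [:: (w, d)].
Proof.
elim: w => [|[f x] w IH] //.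
by rewrite node_paths_cons IH.
Qed.

Lemma chain_ok k At w d : all (fun l => (l.1 \in At) && (l.2 < k)) w ->
  node_ok k At false (chain w d).
Proof.
elim: w => [|[f x] w IH] /=; first by constructor.
move=> /andP [/andP [Hf Hx] Hw]; constructor => //.
move=> d' c [E|//]; case: E => <- <-; split => //; exact: IH.
Qed.

Lemma tree_paths_cons v G : tree_paths (v :: G) = node_paths v ++ tree_paths G.
Proof. by []. Qed.

Lemma chains_paths (U s : seq (seq (nat * nat))) :
  tree_paths (map (fun a => chain a (index a U)) s) = map (fun a => (a, index a U)) s.
Proof. by elim: s => [|a s IH] //=; rewrite tree_paths_cons chain_paths IH. Qed.

Lemma sat_eq T T' w x : tattrs T' = tattrs T -> sat T' w x = sat T w x.
Proof. by move=> E; rewrite /sat /colval E. Qed.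

Lemma witness k psi A n m T U : 2 <= k -> closed_class k A -> bounded_measure psi ->
  A T -> trows T <> [::] -> uniq U -> irr_cover k psi T n U -> size U = m -> 0 < m ->
  exists T', [/\ A T', (exists a, psi_opt k psi false T' a /\ a <= n) &
     exists v0, psi_opt k psi true T' v0 /\ m <= k ^ v0].
Proof.
move=> Hk [HAwf HAcl] Hpsi HT Hne Hu Hirr Hsz Hm.
have Hwf := HAwf _ HT.
set nu := nuf T U.
set T' := J_op nu (I_op [::] T).
have HT' : A T'.
  apply/HAcl; exists T; split => //; exists [::], nu; split => //.
  exact: nuf_dec.
have Eat : tattrs T' = tattrs T by rewrite /T' (I_nil Hwf Hne).
have Erw : trows T' = [seq (r.1, nu r.1) | r <- trows T] by rewrite /T' (I_nil Hwf Hne).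
have Hwf' := HAwf _ HT'.
have Hne' : trows T' <> [::] by rewrite Erw; case: (trows T) Hne.
have [[HO Hcov] _] := Hirr.
have Hsub : forall w, subrows T' w = [seq (r.1, nu r.1) | r <- subrows T w].
  by move=> w; rewrite /subrows Erw filter_map; congr map; apply: eq_filter => r /=;
     rewrite /preim /= (sat_eq _ _ Eat).
have Hcom : forall a, a \in U -> common (subrows T' a) (index a U).
  move=> a Ha; rewrite Hsub; apply/allP => r' /mapP [r].
  rewrite mem_filter => /andP [Hs _] -> /=.
  exact: nuf_in.
have Hcov' : forall r, r \in trows T' -> exists2 a, a \in U & sat T' a r.1.
  move=> r'; rewrite Erw => /mapP [r Hr ->] /=.
  have [a Ha Hs] := Hcov _ Hr; exists a => //; by rewrite (sat_eq _ _ Eat).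
have [a [Ha Hamin]] : exists a, psi_opt k psi false T' a /\ a <= n.
  set G := map (fun a => chain a (index a U)) U.
  have HG : dec_tree k false T' G.
    split.
    - split => //.
      + by rewrite /G; case: (U) Hsz Hm => [<-|].
      + move=> v /List.in_map_iff [a [<- Ha]].
        move: (allP HO _ (In_mem Ha)) => /andP [Hall _].
        by apply: chain_ok; rewrite Eat.
    - move=> r Hr; have [a Ha Hs] := Hcov' _ Hr.
      by exists (a, index a U) => //; rewrite /G chains_paths; apply: map_f.
    - move=> p; rewrite /G chains_paths => /mapP [a Ha ->]; right.
      exact: Hcom.
  have [a Ha] := opt_exists psi Hne' (ex_intro _ G HG).
  exists a; split => //.
  case: Ha => [[//]|[_ _ Hmin]].
  apply: leq_trans (Hmin _ HG) _.
  apply/bigmax_leqP_seq => p; rewrite /G chains_paths => /mapP [b Hb ->] _ /=.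
  by move: (allP HO _ Hb) => /andP [].
have Hat : forall a, a \in U -> {subset map fst a <= tattrs T'}.
  move=> a0 /(allP HO) /andP [Hall _] x /mapP [l Hl ->].
  by rewrite Eat; have /andP [] := allP Hall _ Hl.
have Hdc : forall a, a \in U -> exists d, common (subrows T' a) d.
  by move=> a0 Ha0; exists (index a0 U); apply: Hcom.
have [G0 [HG0 _]] := det_from_cover psi Hk Hwf' Hat Hcov' Hdc.
have [v0 Hv0] := opt_exists psi Hne' (ex_intro _ G0 HG0).
exists T'; split => //; first by exists a.
exists v0; split => //.
case: Hv0 => [[//]|[_ [G [[[HGne HG1 HGok] HGcov HGdec] HGc]] _]].
destruct G as [|v [|w G]]; [by [] | | by have := HG1 isT].
have Hvok := HGok v (or_introl erefl).
rewrite tree_paths1 in HGcov HGdec.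
apply: (leq_trans (n := size (node_paths v))).
  have -> : m = size (iota 0 m) by rewrite size_iota.
  rewrite -(size_map snd); apply: uniq_leq_size; first exact: iota_uniq.
  move=> i; rewrite mem_iota /= => Hi.
  have Hi' : i < size U by rewrite Hsz.
  have HaU := mem_nth [::] Hi'.
  have [r Hr [Hsr Hpr]] := private_row Hu Hirr HaU.
  have Hr' : (r.1, nu r.1) \in trows T' by rewrite Erw; apply: (map_f (fun r => (r.1, nu r.1))).
  have [p Hp Hsp] := HGcov _ Hr'.
  have Hin : (r.1, nu r.1) \in subrows T' p.1 by rewrite mem_filter Hsp.
  case: (HGdec _ Hp) => [E|Hc]; first by rewrite E in Hin.
  have := allP Hc _ Hin => /= /(nuf_priv Hu Hi' Hsr Hpr) <-.
  by apply: map_f.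
apply: paths_count Hvok _ _; first exact: ltnW.
move=> p Hp; case: Hpsi => [_ _ _ _ Hb].
rewrite -(size_map fst); apply: leq_trans (Hb _) _.
rewrite -HGc /tree_cost; apply: leq_bigmax_seq => //; by rewrite /tree_paths /= cats0.
Qed.
Unset Implicit Arguments.

Theorem lemma5 (k : nat) (A : table -> Prop) (psi : seq nat -> nat) :
  2 <= k -> closed_class k A -> nontrivial A -> bounded_measure psi ->
  (forall n, exists m, L_val k psi A n m) ->
  forall n m, L_val k psi A n m -> 0 < m ->
  exists h, H_val k psi A n h /\ Rle (log_base k m) (INR h).
Proof.
move=> Hk Hcl _ Hpsi _ n m HL Hm.
have [[T [HT Hl]] _] := HL.
case: Hl => [[_ E]|[Hne [[U [Hu Hirr Hsz]] _]]]; first by rewrite E in Hm.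
have [T' [HA' [a [Ha Han]] [v0 [Hv0 Hk0]]]] := witness Hk Hcl Hpsi HT Hne Hu Hirr Hsz Hm.
have [h [Hh Hmax]] : exists h, H_val k psi A n h.
  apply: (max_exists (B := m * n)); first by exists v0, T'; split => //; exists a.
  move=> x [T0 [HT0 [a0 [Ha0 Ha0n]] Hx]].
  exact: upper Hk Hcl Hpsi HL HT0 Ha0 Ha0n Hx.
exists h; split; first by split.
apply: real_part => //.
apply: leq_trans Hk0 _; rewrite leq_exp2l //.
  by apply: Hmax; exists T'; split => //; exists a.

Qed.
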